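(* Let $(G,N,\vartheta)$ and $(H,M,\varphi)$ be character triples of finite groups with $(G,N,\vartheta)\geq_c(H,M,\varphi)$, and let $C\leq\mathbf{C}_G(N)$. Let $\nu\in\mathrm{Irr}(C\cap N)$ be the unique irreducible constituent of $\vartheta_{C\cap N}$, which is also the unique irreducible constituent of $\varphi_{C\cap N}$. Then $$\left(\mathbf{N}_G(C)_{\vartheta\cdot\psi},N\cdot C,\vartheta\cdot\psi\right)\geq_c\left(\mathbf{N}_H(C)_{\varphi\cdot\psi},M\cdot C,\varphi\cdot\psi\right)$$ for every $\psi\in\mathrm{Irr}(C\mid\nu)$.
   Context: Central products: since $C$ centralizes $N$ (and hence $M$), $NC$ and $MC$ are central products, written $N\cdot C$ and $M\cdot C$. For $\vartheta\in\mathrm{Irr}(N)$ and $\psi\in\mathrm{Irr}(C)$ lying over the same character $\nu$ of $N\cap C$, $\vartheta\cdot\psi$ denotes the unique irreducible character of $N\cdot C$ with $(\vartheta\cdot\psi)(nc)=\vartheta(n)\psi(c)$ for $n\in N$, $c\in C$ (similarly $\varphi\cdot\psi$ on $M\cdot C$). Subscripts denote stabilizers; $\mathrm{Irr}(C\mid\nu)$ is the set of irreducible characters of $C$ lying over $\nu$. Character triples and $\geq_c$: a character triple $(G,N,\vartheta)$ consists of $N\trianglelefteq G$ and a $G$-invariant $\vartheta\in\mathrm{Irr}(N)$. A projective representation of $G$ associated with $\vartheta$ is a map $\mathcal{P}:G\to\mathrm{GL}_{\vartheta(1)}(\mathbb{C})$ with $\mathcal{P}(x)\mathcal{P}(y)=\alpha(x,y)\mathcal{P}(xy)$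 for a factor set $\alpha$, such that $\mathcal{P}|_N$ is a representation affording $\vartheta$ and $\mathcal{P}(xn)=\mathcal{P}(x)\mathcal{P}(n)$, $\mathcal{P}(nx)=\mathcal{P}(n)\mathcal{P}(x)$ for $x\in G,n\in N$. One writes $(G,N,\vartheta)\geq_c(H,M,\varphi)$ for character triples if $G=NH$, $M=N\cap H$, $\mathbf{C}_G(N)\leq H$, and there are projective representations $\mathcal{P}$ of $G$ associated with $\vartheta$ and $\mathcal{P}'$ of $H$ associated with $\varphi$, with factor sets $\alpha,\alpha'$, such that $\alpha|_{H\times H}=\alpha'$ and for every $c\in\mathbf{C}_G(N)$ the matrices $\mathcal{P}(c)$, $\mathcal{P}'(c)$ are scalar with the same scalar. *)

(* Defs.v *)
From mathcomp Require Import all_boot all_order all_algebra all_fingroup all_solvable all_field all_character.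
Set Implicit Arguments. Unset Strict Implicit. Unset Printing Implicit Defensive.
Import GRing.Theory Num.Theory.
Local Open Scope group_scope.
Local Open Scope ring_scope.

Section Defs.
Variable gT : finGroupType.

Definition char_triple (G N : {group gT}) (theta : 'CF(N)) : Prop :=
  [/\ N <| G, theta \in irr N & G \subset 'I[theta]].

Definition proj_repr_assoc (G N : {group gT}) (theta : 'CF(N)) (n : nat)
    (P : gT -> 'M[algC]_n) (alpha : gT -> gT -> algC) : Prop :=
  [/\ forall x, x \in G -> P x \in unitmx,
      forall x y, x \in G -> y \in G ->
        alpha x y != 0 /\ P x *m P y = alpha x y *: P (x * y)%g,
      mx_repr N P,
      forall m, m \in N -> \tr (P m) = theta m &
      forall x m, x \in G -> m \in N ->
        P (x * m)%g = P x *m P m /\ P (m * x)%g = P m *m P x].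

Definition triple_geq_c (G N : {group gT}) (theta : 'CF(N))
    (H M : {group gT}) (phi : 'CF(M)) : Prop :=
  [/\ @char_triple G N theta, @char_triple H M phi,
      (N * H)%g = G :> {set gT}, M :=: N :&: H /\ 'C_G(N) \subset H &
      exists (n m : nat) (P : gT -> 'M[algC]_n) (P' : gT -> 'M[algC]_m)
             (alpha alpha' : gT -> gT -> algC),
        [/\ @proj_repr_assoc G N theta n P alpha,
            @proj_repr_assoc H M phi m P' alpha',
            (forall x y, x \in H -> y \in H -> alpha x y = alpha' x y) &
            forall c, c \in 'C_G(N) ->
              exists z : algC, P c = z%:M /\ P' c = z%:M]].

End Defs.

Arguments char_triple {gT} G N theta.
Arguments proj_repr_assoc {gT} G N theta n P alpha.
Arguments triple_geq_c {gT} G N theta H M phi.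

(* Main.v *)
Require Import Defs.
From mathcomp Require Import all_boot all_order all_algebra all_fingroup all_solvable all_field all_character.
From mathcomp Require Import mxtens.
Set Implicit Arguments. Unset Strict Implicit. Unset Printing Implicit Defensive.
Import GRing.Theory Num.Theory.
Local Open Scope group_scope.
Local Open Scope ring_scope.

Section Tens.
Variable R : comPzRingType.

Lemma tensZl m n p q (a : R) (A : 'M[R]_(m,n)) (B : 'M[R]_(p,q)) :
  (a *: A) *t B = a *: (A *t B).
Proof. by apply/matrixP=> i j; rewrite !mxE mulrA. Qed.
Lemma tensZr m n p q (a : R) (A : 'M[R]_(m,n)) (B : 'M[R]_(p,q)) :
  A *t (a *: B) = a *: (A *t B).
Proof. by apply/matrixP=> i j; rewrite !mxE mulrCA. Qed.
Lemma tens11 m n : (1%:M : 'M[R]_m) *t (1%:M : 'M[R]_n) = 1%:M.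
Proof.
apply/matrixP=> i j.
case: (mxtens_indexP i)=> i0 i1; case: (mxtens_indexP j)=> j0 j1.
rewrite tensmxE [RHS]mxE [X in X * _]mxE [X in _ * X]mxE.
rewrite (inj_eq (can_inj (@mxtens_indexK m n))) xpair_eqE.
by case: (i0 == j0); case: (i1 == j1); rewrite ?mul1r ?mul0r.
Qed.
Lemma tens_scalar m n (a b : R) :
  (a%:M : 'M[R]_m) *t (b%:M : 'M[R]_n) = (a * b)%:M.
Proof.
rewrite -(scalemx1 _ a) -(scalemx1 _ b) tensZl tensZr tens11 scalerA mulrC.
by rewrite scalemx1.
Qed.

Lemma tr_tens m n (A : 'M[R]_m) (B : 'M[R]_n) : \tr (A *t B) = \tr A * \tr B.
Proof.
rewrite /mxtrace mulr_sum; apply: eq_bigr => i _.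
case: (mxtens_indexP i) => i0 i1.
by rewrite tensmxE mxtens_indexK.
Qed.
End Tens.

Lemma scal_tr k (A : 'M[algC]_k) a : (0 < k)%N -> A = a%:M -> \tr A / k%:R = a.
Proof.
move=> k0 ->; rewrite mxtrace_scalar -[a *+ k]mulr_natr mulfK //.
by rewrite pnatr_eq0 -lt0n.
Qed.

Lemma scalar_unit k (a : algC) : (0 < k)%N -> (a%:M : 'M_k) \in unitmx -> a != 0.
Proof.
move=> k0; apply: contraL => /eqP ->; rewrite unitmxE det_scalar.
by case: k k0 => // k _; rewrite expr0n /= unitr0.
Qed.

Section QCon.
Variables (gT : finGroupType) (K C : {group gT}) (k : nat).
Variable X : mx_representation algC C k.
Hypothesis Xirr : mx_absolutely_irreducible X.
Hypothesis CK : C \subset K.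
Hypothesis KI : K \subset 'I[cfRepr X].

Lemma k_gt0 : (0 < k)%N.
Proof. by case/mx_abs_irrP: Xirr. Qed.

Lemma schur (A : 'M[algC]_k) :
  (forall c, c \in C -> A *m X c = X c *m A) -> A = (\tr A / k%:R)%:M.
Proof.
move=> cA; have /is_scalar_mxP[a ->] : is_scalar_mx A.
  by apply: (mx_abs_irr_cent_scalar Xirr); apply/centgmxP.
by rewrite (@scal_tr _ (a%:M) a) // k_gt0.
Qed.

Lemma KN : K \subset 'N(C).
Proof. exact: subset_trans KI (norm_inertia _). Qed.

Lemma conj_repr r : r \in 'N(C) -> mx_repr C (fun c => X (c ^ r^-1)%g).
Proof.
move=> nr; have nr' : (r^-1)%g \in 'N(C) by rewrite groupV.
split=> [|x y Cx Cy]; first by rewrite conj1g repr_mx1.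
by rewrite conjMg repr_mxM // memJ_norm.
Qed.

Definition Ypred r (Y : 'M[algC]_k) :=
  [&& Y \in unitmx,
      (r \in K) ==> [forall c in C, Y *m X (c ^ r)%g == X c *m Y] &
      (r == 1%g) ==> (Y == 1%:M)].

Lemma exY r : exists Y, Ypred r Y.
Proof.
case: (eqVneq r 1%g) => [-> | r1].
  exists 1%:M; rewrite /Ypred unitmx1 !eqxx /= ?andbT ?implybT.
  by apply/implyP=> _; apply/forallP=> c; apply/implyP=> _; rewrite conjg1 mul1mx mulmx1.
case Kr: (r \in K); last first.
  by exists 1%:M; rewrite /Ypred unitmx1 (negPf r1) Kr.
have nr : r \in 'N(C) by apply: (subsetP KN).
pose Xr := MxRepresentation (conj_repr nr).
have : cfRepr Xr == cfRepr X.
  apply/eqP/cfun_inP=> c Cc; rewrite !cfunE Cc /=.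
  have Ir : r \in 'I[cfRepr X] by apply: (subsetP KI).
  have Ir' : (r^-1)%g \in 'I[cfRepr X] by rewrite groupV.
  have := inertia_valJ c Ir'; rewrite !cfunE memJ_norm ?groupV // Cc /=.
  by move=> ->.
case/cfRepr_rsimP=> B _ fB hB; exists B.
rewrite /Ypred -row_free_unit fB (negPf r1) Kr /= andbT.
apply/forallP=> c; apply/implyP=> Cc; apply/eqP.
have Ccr : (c ^ r)%g \in C by rewrite memJ_norm.
by rewrite -hB //= conjgK.
Qed.

Definition Yf r := xchoose (exY r).
Definition Qf x := Yf (repr (x *: C)%g) *m X ((repr (x *: C))^-1 * x)%g.

Lemma YfP r : Ypred r (Yf r). Proof. exact: xchooseP. Qed.

Lemma Yf_unit r : Yf r \in unitmx. Proof. by case/and3P: (YfP r). Qed.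
Lemma Yf1 : Yf 1%g = 1%:M. Proof. by case/and3P: (YfP 1%g) => _ _; rewrite eqxx => /eqP. Qed.
Lemma Yf_int r c : r \in K -> c \in C -> Yf r *m X (c ^ r)%g = X c *m Yf r.
Proof.
case/and3P: (YfP r) => _ /implyP h _ Kr Cc.
by move/forallP/(_ c): (h Kr); rewrite Cc => /eqP.
Qed.

Lemma reprC x : repr (x *: C)%g \in (x *: C)%g.
Proof. exact: mem_repr (lcoset_refl C x). Qed.

Lemma reprCx x : ((repr (x *: C))^-1 * x)%g \in C.
Proof.
have := reprC x; rewrite mem_lcoset => h.
by rewrite -groupV invMg invgK.
Qed.

Lemma reprK x : x \in K -> repr (x *: C)%g \in K.
Proof.
move=> Kx; have := reprC x; rewrite mem_lcoset => h.
by rewrite -(mulKVg x (repr _)) groupM // (subsetP CK).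
Qed.

Lemma reprCM x c : c \in C -> repr ((x * c) *: C)%g = repr (x *: C)%g.
Proof. by move=> Cc; rewrite lcosetM lcoset_id. Qed.

Lemma Qf_unit x : Qf x \in unitmx.
Proof. by rewrite unitmx_mul Yf_unit repr_mx_unit // reprCx. Qed.

Lemma QfC c : c \in C -> Qf c = X c.
Proof.
move=> Cc; rewrite /Qf lcoset_id // repr_group Yf1 mul1mx invg1 mul1g.
by [].
Qed.

Lemma QfM x c : c \in C -> Qf (x * c)%g = Qf x *m X c.
Proof.
move=> Cc; rewrite /Qf reprCM // -mulmxA -repr_mxM ?reprCx //.
by rewrite mulgA.
Qed.

Lemma Qf_int x c : x \in K -> c \in C -> Qf x *m X (c ^ x)%g = X c *m Qf x.
Proof.
move=> Kx Cc; set r := repr (x *: C)%g.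
have Cr : (r^-1 * x)%g \in C by apply: reprCx.
have Kr : r \in K by apply: reprK.
have nx : x \in 'N(C) by apply: (subsetP KN).
have nr : r \in 'N(C) by apply: (subsetP KN).
have Ccr : (c ^ r)%g \in C by rewrite memJ_norm.
rewrite /Qf -/r -mulmxA -repr_mxM ?memJ_norm //.
have -> : (r^-1 * x * c ^ x = c ^ r * (r^-1 * x))%g.
  by rewrite !conjgE !mulgA !mulgK.
by rewrite repr_mxM // !mulmxA Yf_int.
Qed.

Lemma Qf_cent (A : 'M[algC]_k) x y : x \in K -> y \in K ->
  Qf x *m Qf y = A -> forall c, c \in C -> A *m X (c ^ (x * y))%g = X c *m A.
Proof.
move=> Kx Ky <- c Cc.
have nx : x \in 'N(C) by apply: (subsetP KN).
have Ccx : (c ^ x)%g \in C by rewrite memJ_norm.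
by rewrite conjgM -mulmxA (Qf_int Ky Ccx) mulmxA (Qf_int Kx Cc) [RHS]mulmxA.
Qed.

Definition betaf x y := \tr (invmx (Qf (x * y)%g) *m (Qf x *m Qf y)) / k%:R.

Lemma betafP x y : x \in K -> y \in K ->
  betaf x y != 0 /\ Qf x *m Qf y = betaf x y *: Qf (x * y)%g.
Proof.
move=> Kx Ky; set B := invmx (Qf (x * y)%g) *m (Qf x *m Qf y).
have Kxy : (x * y)%g \in K by rewrite groupM.
have hB : B = (\tr B / k%:R)%:M.
  apply: schur => d Cd.
  have nxy : (x * y)%g \in 'N(C) by apply: (subsetP KN).
  set c := (d ^ (x * y)^-1)%g.
  have Cc : c \in C by rewrite memJ_norm ?groupV.
  have -> : d = (c ^ (x * y))%g by rewrite /c conjgKV.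
  rewrite /B -mulmxA (Qf_cent Kx Ky (erefl _) Cc) mulmxA [RHS]mulmxA.
  congr (_ *m _).
  apply: (canLR (mulKmx (Qf_unit (x * y)%g))).
  by rewrite mulmxA (Qf_int Kxy Cc) -mulmxA mulmxV ?Qf_unit // mulmx1.
have e : Qf x *m Qf y = Qf (x * y)%g *m B.
  by rewrite /B [RHS]mulmxA mulmxV ?Qf_unit // mul1mx.
rewrite /betaf -/B; split.
  apply: (@scalar_unit k); first exact: k_gt0.
  rewrite -hB /B unitmx_mul unitmx_inv !Qf_unit.
  by rewrite unitmx_mul !Qf_unit.
by rewrite e {1}hB mul_mx_scalar.
Qed.

Definition wf x := \tr (Qf x) / k%:R.

Lemma wfP x : x \in K -> x \in 'C(C) -> Qf x = (wf x)%:M /\ wf x != 0.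
Proof.
move=> Kx cx.
have e : Qf x = (wf x)%:M.
  apply: schur => c Cc; have := Qf_int Kx Cc.
  have -> // : (c ^ x)%g = c.
  apply/conjg_fixP; apply/commgP; exact: (esym (centP cx c Cc)).
split=> //; apply: (@scalar_unit k); first exact: k_gt0.
by rewrite -e Qf_unit.
Qed.

End QCon.

Section RCon.
Variables (gT : finGroupType) (Gs Ns Ks Ls C : {group gT}) (ns k : nat).
Variables (thetas : 'CF(Ns)) (tps : 'CF(Ls)).
Variables (Ps : gT -> 'M[algC]_ns) (alphas : gT -> gT -> algC).
Hypothesis PA : proj_repr_assoc Gs Ns thetas ns Ps alphas.
Hypothesis thetas_irr : thetas \in irr Ns.
Variable X : mx_representation algC C k.
Hypothesis k_gt0 : (0 < k)%N.
Variables (Q : gT -> 'M[algC]_k) (beta : gT -> gT -> algC) (wf zf : gT -> algC).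
Hypothesis QU : forall x, x \in Ks -> Q x \in unitmx.
Hypothesis QB : forall x y, x \in Ks -> y \in Ks ->
  beta x y != 0 /\ Q x *m Q y = beta x y *: Q (x * y)%g.
Hypothesis QM : forall x c, x \in Ks -> c \in C -> Q (x * c)%g = Q x *m X c.
Hypothesis QI : forall x c, x \in Ks -> c \in C -> Q x *m X (c ^ x)%g = X c *m Q x.
Hypothesis QC : forall c, c \in C -> Q c = X c.
Hypothesis QW : forall n, n \in Ns -> Q n = (wf n)%:M /\ wf n != 0.
Hypothesis PZ : forall c, c \in C -> Ps c = (zf c)%:M.
Hypothesis XD : forall d, d \in C -> d \in Ns -> X d = (zf d)%:M.
Hypothesis LsE : Ls :=: (Ns * C)%g.
Hypothesis CcN : C \subset 'C(Ns).
Hypothesis CG : C \subset Gs.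
Hypothesis KG : Ks \subset Gs.
Hypothesis KN : Ks \subset 'N(C).
Hypothesis LK : Ls \subset Ks.
Hypothesis KNL : Ks \subset 'N(Ls).
Hypothesis nNs : Gs \subset 'N(Ns).
Hypothesis tpsE : forall n c, n \in Ns -> c \in C ->
  tps (n * c)%g = thetas n * \tr (X c).
Variable t : gT -> gT.
Hypothesis T1 : forall x, x \in Ks -> t x \in Ks /\ ((t x)^-1 * x)%g \in Ls.
Hypothesis T2 : forall x l, x \in Ks -> l \in Ls -> t (x * l)%g = t x.
Hypothesis T4 : forall l, l \in Ls -> t l = 1%g.

Let PU : forall x, x \in Gs -> Ps x \in unitmx.
Proof. by case: PA. Qed.
Let PAl : forall x y, x \in Gs -> y \in Gs ->
        alphas x y != 0 /\ Ps x *m Ps y = alphas x y *: Ps (x * y)%g.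
Proof. by case: PA. Qed.
Let PR : mx_repr Ns Ps. Proof. by case: PA. Qed.
Let PT : forall m, m \in Ns -> \tr (Ps m) = thetas m. Proof. by case: PA. Qed.
Let PC : forall x m, x \in Gs -> m \in Ns ->
        Ps (x * m)%g = Ps x *m Ps m /\ Ps (m * x)%g = Ps m *m Ps x.
Proof. by case: PA. Qed.

Let rP := MxRepresentation PR.
Let P1 : Ps 1%g = 1%:M. Proof. by case: PR. Qed.
Let PM : forall x y, x \in Ns -> y \in Ns -> Ps (x * y)%g = Ps x *m Ps y.
Proof. by case: PR => _ h x y Nx Ny; apply: h. Qed.

Lemma ns_gt0 : (0 < ns)%N.
Proof.
case/irrP: thetas_irr => i ei.
have := irr1_neq0 i; rewrite -ei -PT // P1 mxtrace1.
by rewrite pnatr_eq0 lt0n.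
Qed.

Lemma zf_nz c : c \in C -> zf c != 0.
Proof.
move=> Cc; apply: (scalar_unit ns_gt0); rewrite -PZ //.
by apply: PU; apply: (subsetP CG).
Qed.

Definition nd l := repr (Ns :&: (l *: C))%g.
Definition rho l := Ps (nd l) *t X ((nd l)^-1 * l)%g.
Definition Phi x := Ps x *t Q x.
Definition R x := Phi (t x) *m rho ((t x)^-1 * x)%g.
Definition mu x := \tr (R x *m invmx (Phi x)) / (ns * k)%:R.
Definition gam x y := mu x * mu y * (alphas x y * beta x y) / mu (x * y)%g.

Lemma rhoE n c : n \in Ns -> c \in C -> rho (n * c)%g = Ps n *t X c.
Proof.
move=> Nn Cc.
have hn : n \in (Ns :&: ((n * c) *: C))%g.
  by rewrite inE Nn mem_lcoset invMg -mulgA mulVg mulg1 groupV.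
have := mem_repr n hn; rewrite -/(nd _) inE mem_lcoset => /andP[Nn'].
rewrite /rho; move: (nd _) Nn' => n' Nn' hd.
have [d [Cd Nd ->]] : exists d, [/\ d \in C, d \in Ns & n' = (n * d)%g].
  exists (n^-1 * n')%g; split; last by rewrite mulKVg.
    have -> : (n^-1 * n' = c * ((n * c)^-1 * n'))%g.
      by rewrite invMg !mulgA mulgV mul1g.
    by rewrite groupM.
  by rewrite groupM ?groupV.
have -> : ((n * d)^-1 * (n * c) = d^-1 * c)%g.
  by rewrite invMg -!mulgA mulKg.
have Xd : X d^-1%g = ((zf d)^-1)%:M.
  by rewrite (repr_mxV X Cd) XD // invmx_scalar.
rewrite PM // (repr_mxM X) ?groupV // Xd (PZ Cd) mul_mx_scalar mul_scalar_mx.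
by rewrite tensZl tensZr scalerA mulfV ?scale1r // zf_nz.
Qed.

Lemma rho1 : rho 1%g = 1%:M.
Proof.
by rewrite -(mulg1 1%g) rhoE ?group1 // P1 (repr_mx1 X) tens11.
Qed.

Lemma decL l : l \in Ls -> exists n c, [/\ n \in Ns, c \in C & l = (n * c)%g].
Proof. by rewrite LsE => /mulsgP[n c Nn Cc ->]; exists n, c. Qed.

Lemma commNC n c : n \in Ns -> c \in C -> (c * n = n * c)%g.
Proof. by move=> Nn Cc; have := centP (subsetP CcN c Cc) n Nn. Qed.

Lemma rhoM l l' : l \in Ls -> l' \in Ls -> rho (l * l')%g = rho l *m rho l'.
Proof.
move=> /decL[n [c [Nn Cc ->]]] /decL[n' [c' [Nn' Cc' ->]]].
have -> : (n * c * (n' * c') = (n * n') * (c * c'))%g.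
  by rewrite -!mulgA; congr (_ * _)%g; rewrite !mulgA (commNC Nn' Cc).
by rewrite !rhoE ?groupM // tensmx_mul PM // (repr_mxM X).
Qed.

Lemma rho_tr l : l \in Ls -> \tr (rho l) = tps l.
Proof.
by move=> /decL[n [c [Nn Cc ->]]]; rewrite rhoE // tr_tens PT // tpsE.
Qed.

Lemma KGx x : x \in Ks -> x \in Gs. Proof. exact: (subsetP KG). Qed.
Lemma LKx l : l \in Ls -> l \in Ks. Proof. exact: (subsetP LK). Qed.
Lemma NLx n : n \in Ns -> n \in Ls. Proof. by move=> Nn; rewrite LsE -(mulg1 n) mem_mulg. Qed.
Lemma CLx c : c \in C -> c \in Ls. Proof. by move=> Cc; rewrite LsE -(mul1g c) mem_mulg. Qed.

Lemma Phi_unit x : x \in Ks -> Phi x \in unitmx.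
Proof.
move=> Kx; apply: tensmx_unit; rewrite -?lt0n ?ns_gt0 ?k_gt0 ?QU //.
by apply: PU; apply: KGx.
Qed.

Lemma PhiM x y : x \in Ks -> y \in Ks ->
  Phi x *m Phi y = (alphas x y * beta x y) *: Phi (x * y)%g.
Proof.
move=> Kx Ky; rewrite /Phi tensmx_mul.
have [_ ->] := PAl (KGx Kx) (KGx Ky); have [_ ->] := QB Kx Ky.
by rewrite tensZl tensZr scalerA.
Qed.

Lemma Phi_int x l : x \in Ks -> l \in Ls -> Phi x *m rho (l ^ x)%g = rho l *m Phi x.
Proof.
move=> Kx /decL[n [c [Nn Cc ->]]].
have Gx := KGx Kx.
have nNx : x \in 'N(Ns) by apply: (subsetP nNs).
have nCx : x \in 'N(C) by apply: (subsetP KN).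
rewrite conjMg !rhoE ?memJ_norm // /Phi !tensmx_mul (QI Kx Cc).
have Nnx : (n ^ x)%g \in Ns by rewrite memJ_norm.
have [e1 _] := PC Gx Nnx; have [_ e2] := PC Gx Nn.
by rewrite -e1 -e2 -conjgC.
Qed.

Lemma Phi_L n c : n \in Ns -> c \in C ->
  Phi (n * c)%g = (zf c * wf n) *: rho (n * c)%g.
Proof.
move=> Nn Cc; rewrite /Phi rhoE //.
have [_ ->] := PC (subsetP CG c Cc) Nn.
rewrite QM ?LKx ?NLx // (PZ Cc); have [-> _] := QW Nn.
by rewrite mul_mx_scalar mul_scalar_mx tensZl tensZr scalerA.
Qed.

Lemma R_Phi x n c : x \in Ks -> n \in Ns -> c \in C ->
  ((t x)^-1 * x = n * c)%g ->
  R x = (alphas (t x) (n * c)%g * beta (t x) (n * c)%g / (zf c * wf n)) *: Phi x.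
Proof.
move=> Kx Nn Cc e.
have [Kt _] := T1 Kx.
have Lnc : (n * c)%g \in Ls by rewrite LsE mem_mulg.
have wn : wf n != 0 by case: (QW Nn).
rewrite /R e.
have -> : rho (n * c)%g = (zf c * wf n)^-1 *: Phi (n * c)%g.
  by rewrite Phi_L // scalerA mulVf ?scale1r // mulf_neq0 ?zf_nz.
have ex : Phi x = Phi (t x * (n * c))%g by rewrite -e mulKVg.
rewrite -scalemxAr (PhiM Kt (LKx Lnc)) ex.
by apply/matrixP=> i j; rewrite !mxE mulrA [_^-1 * _]mulrC.
Qed.

Lemma mu_val x n c : x \in Ks -> n \in Ns -> c \in C ->
  ((t x)^-1 * x = n * c)%g ->
  mu x = alphas (t x) (n * c)%g * beta (t x) (n * c)%g / (zf c * wf n).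
Proof.
move=> Kx Nn Cc e; rewrite /mu (R_Phi Kx Nn Cc e) -scalemxAl mulmxV ?Phi_unit //.
apply: scal_tr; first by rewrite muln_gt0 ns_gt0 k_gt0.
by rewrite scalemx1.
Qed.

Lemma mu_nz x : x \in Ks -> mu x != 0.
Proof.
move=> Kx; have [Kt /decL[n [c [Nn Cc e]]]] := T1 Kx.
have Lnc : (n * c)%g \in Ls by rewrite -e; case: (T1 Kx).
have a0 : alphas (t x) (n * c)%g != 0 by case: (PAl (KGx Kt) (KGx (LKx Lnc))).
have b0 : beta (t x) (n * c)%g != 0 by case: (QB Kt (LKx Lnc)).
have w0 : wf n != 0 by case: (QW Nn).
by rewrite (mu_val Kx Nn Cc e) !mulf_neq0 // invr_eq0 mulf_neq0 // zf_nz.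
Qed.

Lemma R_mu x : x \in Ks -> R x = mu x *: Phi x.
Proof.
move=> Kx; have [Kt /decL[n [c [Nn Cc e]]]] := T1 Kx.
by rewrite (R_Phi Kx Nn Cc e) (mu_val Kx Nn Cc e).
Qed.


Lemma Phi1 : Phi 1%g = 1%:M.
Proof. by rewrite /Phi P1 QC ?group1 // (repr_mx1 X) tens11. Qed.

Lemma R_L l : l \in Ls -> R l = rho l.
Proof. by move=> Ll; rewrite /R T4 // Phi1 mul1mx invg1 mul1g. Qed.

Lemma R_right x l : x \in Ks -> l \in Ls -> R (x * l)%g = R x *m R l.
Proof.
move=> Kx Ll; have [_ Lm] := T1 Kx.
by rewrite (R_L Ll) /R T2 // mulgA rhoM // mulmxA.
Qed.

Lemma R_left x l : x \in Ks -> l \in Ls -> R (l * x)%g = R l *m R x.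
Proof.
move=> Kx Ll; have [Kt Lm] := T1 Kx.
have nLx : x \in 'N(Ls) by apply: (subsetP KNL).
have nLt : t x \in 'N(Ls) by apply: (subsetP KNL).
have Llt : (l ^ t x)%g \in Ls by rewrite memJ_norm.
rewrite (R_L Ll) /R conjgC T2 ?memJ_norm // -conjgC.
have -> : ((t x)^-1 * (l * x) = (l ^ t x) * ((t x)^-1 * x))%g.
  by rewrite conjgE -!mulgA mulKVg.
by rewrite rhoM // mulmxA Phi_int // mulmxA.
Qed.

Lemma R_unit x : x \in Ks -> R x \in unitmx.
Proof. by move=> Kx; rewrite (R_mu Kx) unitmxZ ?Phi_unit // unitfE mu_nz. Qed.

Lemma R_proj x y : x \in Ks -> y \in Ks ->
  gam x y != 0 /\ R x *m R y = gam x y *: R (x * y)%g.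
Proof.
move=> Kx Ky; have Kxy : (x * y)%g \in Ks by rewrite groupM.
have a0 : alphas x y != 0 by case: (PAl (KGx Kx) (KGx Ky)).
have b0 : beta x y != 0 by case: (QB Kx Ky).
split.
  rewrite /gam; apply: mulf_neq0; last by rewrite invr_eq0 mu_nz.
  by apply: mulf_neq0; [apply: mulf_neq0; exact: mu_nz | exact: mulf_neq0].
rewrite !R_mu // -scalemxAl -scalemxAr PhiM //.
apply/matrixP=> i j; rewrite !mxE /gam.
rewrite -[_ / mu (x * y)%g * _]mulrA [_^-1 * (mu _ * _)]mulrA mulVf ?mu_nz //.
by rewrite mul1r !mulrA.
Qed.

Theorem R_assoc : proj_repr_assoc Ks Ls tps (ns * k) R gam.
Proof.
split.
- exact: R_unit.
- exact: R_proj.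
- split; first by rewrite R_L ?group1 // rho1.
  by move=> l l' Ll Ll'; rewrite !R_L ?groupM // rhoM.
- by move=> l Ll; rewrite R_L // rho_tr.
- by move=> x l Kx Ll; rewrite R_right // R_left.
Qed.

Theorem RC_main : exists (Rr : gT -> 'M[algC]_(ns * k)) (gm : gT -> gT -> algC)
    (mf : gT -> algC),
  [/\ proj_repr_assoc Ks Ls tps (ns * k) Rr gm,
      forall x, x \in Ks -> Rr x = mf x *: (Ps x *t Q x),
      forall x y, x \in Ks -> y \in Ks ->
        gm x y = mf x * mf y * (alphas x y * beta x y) / mf (x * y)%g &
      forall x n c, x \in Ks -> n \in Ns -> c \in C ->
        ((t x)^-1 * x = n * c)%g ->
        mf x = alphas (t x) (n * c)%g * beta (t x) (n * c)%g / (zf c * wf n)].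
Proof.
exists R, gam, mu; split.
- exact: R_assoc.
- exact: R_mu.
- by [].
- exact: mu_val.
Qed.

End RCon.

Lemma scalar_inj n (a b : algC) : (0 < n)%N -> (a%:M : 'M_n) = b%:M -> a = b.
Proof.
move=> n0 e; rewrite -(@scal_tr n (a%:M) a) // -(@scal_tr n (b%:M) b) //.
by rewrite e.
Qed.

Lemma dim_gt0 (gT : finGroupType) (G N : {group gT}) (theta : 'CF(N)) n P al :
  proj_repr_assoc G N theta n P al -> theta \in irr N -> (0 < n)%N.
Proof.
case=> _ _ [P1 _] PT _ /irrP[i ei].
have := irr1_neq0 i; rewrite -ei -PT // P1 mxtrace1.
by rewrite pnatr_eq0 lt0n.
Qed.

Lemma constt_scale (gT : finGroupType) (G : {group gT}) (a : algC) (j : Iirr G) :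
  a != 0 -> irr_constt (a *: 'chi_j) =i pred1 j.
Proof.
move=> a0 i; rewrite inE /= cfdotZl cfdot_irr.
case: (eqVneq j i) => [->|ne]; first by rewrite inE eqxx mulr1 a0.
by rewrite inE mulr0 eqxx eq_sym (negPf ne).
Qed.

Lemma res_scalar (gT : finGroupType) (Ns D : {group gT}) n
    (rG : mx_representation algC Ns n) (z : gT -> algC) :
  D \subset Ns -> (0 < n)%N -> (forall d, d \in D -> rG d = (z d)%:M) ->
  exists j : Iirr D, (forall d, d \in D -> z d = 'chi_j d) /\
     'Res[D] (cfRepr rG) = n%:R *: 'chi_j.
Proof.
move=> sDN n0 hz.
have z1 : z 1%g = 1.
  by apply: (@scalar_inj n) => //; rewrite -hz // repr_mx1.
pose r1 d := ((z d)%:M : 'M[algC]_1).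
have r1P : mx_repr D r1.
  split=> [|x y Dx Dy]; first by rewrite /r1 z1.
  rewrite /r1 -scalar_mxM; congr (_%:M).
  apply: (@scalar_inj n) => //.
  by rewrite scalar_mxM -!hz ?groupM // (repr_mxM rG) ?(subsetP sDN).
pose lam := cfRepr (MxRepresentation r1P).
have Llam : lam \is a linear_char by rewrite qualifE/= cfRepr_char cfRepr1 eqxx.
have /irrP[j ej] := lin_char_irr Llam.
have lamE d : d \in D -> lam d = z d.
  by move=> Dd; rewrite /lam cfunE Dd /= mxtrace_scalar mulr1n.
exists j; split=> [d Dd|]; first by rewrite -ej lamE.
apply/cfun_inP=> d Dd; rewrite cfResE // cfunE (subsetP sDN) //= cfunE -ej lamE //.
by rewrite hz // mxtrace_scalar mulr1n mulr_natl.
Qed.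

Lemma inertia_char (gT : finGroupType) (Gs Ns C : {group gT}) (thetas : 'CF(Ns))
    (psi : 'CF(C)) (tps : 'CF((Ns <*> C)%G)) :
  Ns <| Gs -> Gs \subset 'I[thetas] -> thetas 1%g != 0 -> C \subset 'C(Ns) ->
  (forall n c, n \in Ns -> c \in C -> tps (n * c)%g = thetas n * psi c) ->
  'I_('N_Gs(C))[tps] = Gs :&: 'I[psi].
Proof.
move=> nNG GI th1 cNC tE; apply/setP=> x; rewrite !in_setI.
case Gx: (x \in Gs) => //=; case nCx: (x \in 'N(C)) => //=; last first.
  by rewrite /inertia in_set nCx.
have nNx : x \in 'N(Ns) by apply: (subsetP (normal_norm nNG)).
have nLx : x \in 'N(Ns <*> C).
  have : [set x] \subset 'N(Ns <*> C) by apply: normsY; rewrite sub1set.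
  by rewrite sub1set.
have nxV : (x^-1)%g \in 'N(C) by rewrite groupV.
apply/idP/idP => /inertiaJ e; apply/setIdP; split=> //; apply/eqP.
  apply/cfun_inP => c Cc; rewrite cfConjgE //.
  move/cfunP: e => /(_ c); rewrite cfConjgE //.
  have Lc : forall c', c' \in C -> tps c' = thetas 1%g * psi c'.
    by move=> c' Cc'; rewrite -(mul1g c') tE // mul1g.
  rewrite !Lc ?memJ_norm //; exact: mulfI.
apply/cfun_inP => l Ll.
have : l \in (Ns * C)%g by rewrite -cent_joinEr.
case/mulsgP => n c Nn Cc ->.
have IxV : (x^-1)%g \in 'I[thetas] by rewrite groupV (subsetP GI).
rewrite cfConjgE // conjMg !tE ?memJ_norm ?groupV // inertia_valJ //.
by rewrite -cfConjgE // e.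
Qed.


Unset Implicit Arguments.

Theorem lemma3p3 (gT : finGroupType) (G N H M C : {group gT})
    (theta : 'CF(N)) (phi : 'CF(M)) (nu : Iirr (C :&: N)%G) :
  triple_geq_c G N theta H M phi ->
  C \subset 'C_G(N) ->
  (* nu is the unique irreducible constituent of theta_{C cap N} *)
  irr_constt ('Res[(C :&: N)%G] theta) =i pred1 nu ->
  (* ... which is also the unique irreducible constituent of phi_{C cap N} *)
  irr_constt ('Res[(C :&: N)%G] phi) =i pred1 nu /\
  (forall (psi : Iirr C), nu \in irr_constt ('Res[(C :&: N)%G] 'chi_psi) ->
   forall (tp : 'CF((N <*> C)%G)) (pp : 'CF((M <*> C)%G)),
     tp \in irr (N <*> C)%G ->
     (forall n c, n \in N -> c \in C -> tp (n * c)%g = theta n * 'chi_psi c) ->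
     pp \in irr (M <*> C)%G ->
     (forall m c, m \in M -> c \in C -> pp (m * c)%g = phi m * 'chi_psi c) ->
     triple_geq_c ('I_('N_G(C))[tp])%G (N <*> C)%G tp
                  ('I_('N_H(C))[pp])%G (M <*> C)%G pp).
Proof.
Proof.
move=> [[nNG thirr GI] [nMH phiirr HI] NHG [MNH CGH]
        [n [m [P [P' [al [al' [PA PA' aleq scal]]]]]]]] CC cnst.
have CG : C \subset G := subset_trans CC (subsetIl _ _).
have cCN : C \subset 'C(N) := subset_trans CC (subsetIr _ _).
have CH : C \subset H := subset_trans CC CGH.
have n0 := dim_gt0 PA thirr.
have m0 := dim_gt0 PA' phiirr.
pose zf c := \tr (P c) / n%:R.
have Pz c : c \in 'C_G(N) -> P c = (zf c)%:M /\ P' c = (zf c)%:M.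
  move=> Cc; have [z [e1 e2]] := scal c Cc.
  by have -> : zf c = z by apply: scal_tr.
have CCN c : c \in C -> c \in 'C_G(N) by apply: (subsetP CC).
have DC : (C :&: N)%G \subset C := subsetIl _ _.
have DN : (C :&: N)%G \subset N := subsetIr _ _.
have MN : M \subset N by rewrite MNH subsetIl.
have MH : M \subset H by rewrite MNH subsetIr.
have DM : (C :&: N)%G \subset M.
  by rewrite MNH subsetI DN (subset_trans DC CH).
have [_ _ PR PT _] := PA.
have [_ _ PR' PT' _] := PA'.
pose rP := MxRepresentation PR.
have thE : cfRepr rP = theta.
  by apply/cfun_inP=> x Nx; rewrite cfunE Nx PT.
have [j [zj ResT]] := res_scalar (rG := rP) (z := zf) DN n0
   (fun d Dd => (Pz d (CCN d (subsetP DC d Dd))).1).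
have n0' : n%:R != 0 :> algC by rewrite pnatr_eq0 -lt0n.
have m0' : m%:R != 0 :> algC by rewrite pnatr_eq0 -lt0n.
have jnu : j = nu.
  have h1 : j \in irr_constt ('Res[(C :&: N)%G] theta).
    by rewrite -thE ResT constt_scale ?inE.
  by move: (cnst j); rewrite h1 inE => /esym/eqP.
subst j.
have ResP : 'Res[(C :&: N)%G] phi = m%:R *: 'chi_nu.
  apply/cfun_inP=> d Dd; rewrite cfResE // -PT' ?(subsetP DM) //.
  rewrite (Pz d (CCN d (subsetP DC d Dd))).2 mxtrace_scalar cfunE zj //.
  by rewrite mulr_natl.
split; first by rewrite ResP; apply: constt_scale.
move=> psi hnu tp pp tpirr tpE ppirr ppE.
have [k [X [eX Xirr]]] : exists k (X : mx_representation algC C k),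
    cfRepr X = 'chi_psi /\ mx_absolutely_irreducible X.
  by exists _, 'Chi_psi; split; [exact: irrRepr | exact/groupC/socle_irr].
have k0 := k_gt0 Xirr.
have Xtr c : c \in C -> \tr (X c) = 'chi_psi c.
  by move=> Cc; rewrite -eX cfunE Cc.
have XD d : d \in C -> d \in N -> X d = (zf d)%:M.
  move=> Cd Nd.
  have Dd : d \in (C :&: N)%G by rewrite inE Cd Nd.
  have Xs e : e \in (C :&: N)%G -> X e = (\tr (X e) / k%:R)%:M.
    move=> /setIP[Ce Ne]; apply: (schur Xirr) => c Cc.
    have ce : (e * c = c * e)%g.
      by have := centP (subsetP cCN c Cc) e Ne.
    by rewrite -!(repr_mxM X) // ce.
  have [j [zj' ResX]] := res_scalar (rG := X) DC k0 Xs.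
  have jnu : j = nu.
    by move: hnu; rewrite -eX ResX constt_scale ?inE ?pnatr_eq0 -?lt0n // => /eqP.
  by rewrite Xs // zj' // jnu -zj.
have cCM : C \subset 'C(M) := subset_trans cCN (centS MN).
have LE : (N <*> C)%G = (N * C)%g :> {set gT} by rewrite /= cent_joinEr.
have L'E : (M <*> C)%G = (M * C)%g :> {set gT} by rewrite /= cent_joinEr.
have th1 : theta 1%g != 0 by case/irrP: thirr => i ->; apply: irr1_neq0.
have ph1 : phi 1%g != 0 by case/irrP: phiirr => i ->; apply: irr1_neq0.
have KE := inertia_char nNG GI th1 cCN tpE.
have K'E := inertia_char nMH HI ph1 cCM ppE.
set K := ('I_('N_G(C))[tp])%G in KE *.
set K' := ('I_('N_H(C))[pp])%G in K'E *.
set L := (N <*> C)%G in LE *.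
set L' := (M <*> C)%G in L'E *.
have HG : H \subset G by rewrite -NHG mulG_subr.
have NG : N \subset G := normal_sub nNG.
have memK x : (x \in K) = (x \in G) && (x \in 'I['chi_psi]).
  by rewrite -in_setI -KE.
have memK' x : (x \in K') = (x \in H) && (x \in 'I['chi_psi]).
  by rewrite -in_setI -K'E.
have NI : N \subset 'I['chi_psi].
  by apply: subset_trans (cent_sub_inertia _); rewrite centsC.
have CI : C \subset 'I['chi_psi] := sub_inertia _.
have IN : 'I['chi_psi] \subset 'N(C) := norm_inertia _.
have KI' : K \subset 'I[cfRepr X].
  by rewrite eX; apply/subsetP => x; rewrite memK => /andP[].
have CK : C \subset K by apply/subsetP => c Cc; rewrite memK (subsetP CG) // (subsetP CI).
have NK : N \subset K by apply/subsetP => a Na; rewrite memK (subsetP NG) // (subsetP NI).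
have K'K : K' \subset K.
  by apply/subsetP => x; rewrite memK memK' => /andP[Hx ->]; rewrite (subsetP HG).
have CK' : C \subset K' by apply/subsetP => c Cc; rewrite memK' (subsetP CH) // (subsetP CI).
have MK' : M \subset K'.
  by apply/subsetP => a Ma; rewrite memK' (subsetP MH) // (subsetP NI) // (subsetP MN).
have KG : K \subset G by apply/subsetP => x; rewrite memK => /andP[].
have K'H : K' \subset H by apply/subsetP => x; rewrite memK' => /andP[].
have KNC : K \subset 'N(C).
  by apply/subsetP => x; rewrite memK => /andP[_ /(subsetP IN)].
have K'NC : K' \subset 'N(C) := subset_trans K'K KNC.
have LK : L \subset K by rewrite join_subG NK CK.
have L'K' : L' \subset K' by rewrite join_subG MK' CK'.
have KNL : K \subset 'N(L).
  by apply: normsY => //; apply: subset_trans KG (normal_norm nNG).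
have K'NL' : K' \subset 'N(L').
  by apply: normsY => //; apply: subset_trans K'H (normal_norm nMH).
have L'L : L' \subset L.
  by rewrite join_subG (subset_trans MN (joing_subl _ _)) joing_subr.
have L'I : L' :=: L :&: K'.
  apply/eqP; rewrite eqEsubset subsetI L'L L'K' /=.
  apply/subsetP => x /setIP[Lx K'x].
  have : x \in (N * C)%g by rewrite -LE.
  case/mulsgP => a c Na Cc ex.
  have Ha : a \in H.
    have -> : a = (x * c^-1)%g by rewrite ex mulgK.
    apply: groupM; first exact: (subsetP K'H).
    by rewrite groupV; apply: (subsetP CH).
  have Ma : a \in M by rewrite MNH inE Na.
  by rewrite L'E ex mem_mulg.
have decK x : x \in K -> exists a h, [/\ a \in N, h \in K', x = (a * h)%g
   & (x^-1 * h)%g \in N].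
  rewrite memK => /andP[Gx Ix].
  move: Gx; rewrite -NHG => /mulsgP[a h Na Hh ex].
  have Ih : h \in 'I['chi_psi].
    have -> : h = (a^-1 * x)%g by rewrite ex mulKg.
    by apply: groupM; first by rewrite groupV (subsetP NI).
  exists a, h; split=> //; first by rewrite memK' Hh.
  have nNh : h \in 'N(N) by apply: (subsetP (normal_norm nNG)); rewrite (subsetP HG).
  have -> : (x^-1 * h = (a^-1) ^ h)%g by rewrite ex invMg conjgE -mulgA.
  by rewrite memJ_norm ?groupV.
pose t x := repr (K' :&: (x *: L))%g.
have T2 x l : l \in L -> t (x * l)%g = t x.
  by move=> Ll; rewrite /t lcosetM lcoset_id.
have T4 l : l \in L -> t l = 1%g.
  move=> Ll; rewrite /t lcoset_id //.
  exact: (repr_group (K' :&: L)%G).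
have T1 x : x \in K -> t x \in K' /\ ((t x)^-1 * x)%g \in L.
  move=> Kx; have [a [h [Na K'h ex xh]]] := decK x Kx.
  have hin : h \in (K' :&: (x *: L))%g.
    by rewrite inE K'h mem_lcoset (subsetP (joing_subl _ _)).
  have := mem_repr _ hin; rewrite -/(t x) inE mem_lcoset => /andP[-> ?].
  by split=> //; rewrite -groupV invMg invgK.
have T1' x : x \in K' -> t x \in K' /\ ((t x)^-1 * x)%g \in L'.
  move=> K'x; have [K't Lm] := T1 x (subsetP K'K x K'x).
  split=> //; rewrite L'I inE Lm.
  by rewrite groupM ?groupV.
pose Q := Qf KI'.
have QU x : x \in K -> Q x \in unitmx by move=> _; apply: Qf_unit.
have QB x y : x \in K -> y \in K ->
    betaf KI' x y != 0 /\ Q x *m Q y = betaf KI' x y *: Q (x * y)%g.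
  by move=> Kx Ky; apply: (betafP Xirr CK KI').
have QM x c : x \in K -> c \in C -> Q (x * c)%g = Q x *m X c.
  by move=> _ Cc; apply: QfM.
have QI x c : x \in K -> c \in C -> Q x *m X (c ^ x)%g = X c *m Q x.
  by move=> Kx Cc; apply: (Qf_int CK KI').
have QC c : c \in C -> Q c = X c by move=> Cc; apply: QfC.
have cNC : N \subset 'C(C) by rewrite centsC.
have QW a : a \in N -> Q a = (wf KI' a)%:M /\ wf KI' a != 0.
  move=> Na; apply: (wfP Xirr CK KI'); first exact: (subsetP NK).
  exact: (subsetP cNC).
have PZ c : c \in C -> P c = (zf c)%:M by move=> Cc; case: (Pz c (CCN c Cc)).
have PZ' c : c \in C -> P' c = (zf c)%:M by move=> Cc; case: (Pz c (CCN c Cc)).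
have XD' d : d \in C -> d \in M -> X d = (zf d)%:M.
  by move=> Cd Md; apply: XD => //; apply: (subsetP MN).
have tpE' a c : a \in N -> c \in C -> tp (a * c)%g = theta a * \tr (X c).
  by move=> Na Cc; rewrite Xtr // tpE.
have ppE' a c : a \in M -> c \in C -> pp (a * c)%g = phi a * \tr (X c).
  by move=> Ma Cc; rewrite Xtr // ppE.
have T1x x : x \in K -> t x \in K /\ ((t x)^-1 * x)%g \in L.
  by move=> Kx; have [h1 h2] := T1 x Kx; split=> //; apply: (subsetP K'K).
have T2x x l : x \in K -> l \in L -> t (x * l)%g = t x.
  by move=> _; apply: T2.
have T2' x l : x \in K' -> l \in L' -> t (x * l)%g = t x.
  by move=> _ Ll; apply: T2; apply: (subsetP L'L).
have T4' l : l \in L' -> t l = 1%g.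
  by move=> Ll; apply: T4; apply: (subsetP L'L).
have QU' x : x \in K' -> Q x \in unitmx by move=> _; apply: Qf_unit.
have QB' x y : x \in K' -> y \in K' ->
    betaf KI' x y != 0 /\ Q x *m Q y = betaf KI' x y *: Q (x * y)%g.
  by move=> Kx Ky; apply: QB; apply: (subsetP K'K).
have QM' x c : x \in K' -> c \in C -> Q (x * c)%g = Q x *m X c.
  by move=> _ Cc; apply: QfM.
have QI' x c : x \in K' -> c \in C -> Q x *m X (c ^ x)%g = X c *m Q x.
  by move=> Kx Cc; apply: QI => //; apply: (subsetP K'K).
have QW' a : a \in M -> Q a = (wf KI' a)%:M /\ wf KI' a != 0.
  by move=> Ma; apply: QW; apply: (subsetP MN).
have [RG [gG [muG [PAG RGmu gGE muGE]]]] :=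
  RC_main PA thirr k0 QU QB QM QI QC QW PZ XD LE cCN CG KG KNC LK KNL
    (normal_norm nNG) tpE' T1x T2x T4.
have [RH [gH [muH [PAH RHmu gHE muHE]]]] :=
  RC_main PA' phiirr k0 QU' QB' QM' QI' QC QW' PZ' XD' L'E cCM CH K'H K'NC L'K'
    K'NL' (normal_norm nMH) ppE' T1' T2' T4'.
have muEq z : z \in K' -> muG z = muH z.
  move=> K'z; have [K't] := T1' z K'z; rewrite L'E => /mulsgP[a c Ma Cc e].
  have Hac : (a * c)%g \in H.
    by apply: groupM; [apply: (subsetP MH) | apply: (subsetP CH)].
  rewrite (muGE z a c) ?(subsetP K'K) ?(subsetP MN) // (muHE z a c) //.
  by rewrite aleq // (subsetP K'H).
split.
- by split; [rewrite /normal LK KNL | exact: tpirr | exact: subsetIr].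
- by split; [rewrite /normal L'K' K'NL' | exact: ppirr | exact: subsetIr].
- apply/eqP; rewrite eqEsubset mulG_subG LK K'K /=.
  apply/subsetP => x Kx; have [a [h [Na K'h ex _]]] := decK x Kx.
  by rewrite ex mem_mulg // (subsetP (joing_subl _ _)).
- split; first exact: L'I.
  apply/subsetP => x /setIP[Kx cLx].
  have cNx : x \in 'C(N) := subsetP (centS (joing_subl N C)) x cLx.
  have Gx : x \in G by apply: (subsetP KG).
  rewrite memK' (subsetP CGH) /=; last by rewrite inE Gx cNx.
  by move: Kx; rewrite memK => /andP[_ ->].
exists (n * k)%N, (m * k)%N, RG, RH, gG, gH; split=> //.
  move=> x y K'x K'y; have K'xy : (x * y)%g \in K' by rewrite groupM.
  rewrite gGE ?(subsetP K'K) // gHE // !muEq //.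
  by rewrite aleq // (subsetP K'H).
move=> c /setIP[Kc cLc].
have cCc : c \in 'C(C) := subsetP (centS (joing_subr N C)) c cLc.
have cNc : c \in 'C(N) := subsetP (centS (joing_subl N C)) c cLc.
have Gc : c \in G by apply: (subsetP KG).
have K'c : c \in K'.
  rewrite memK' (subsetP CGH) /=; last by rewrite inE Gc cNc.
  by move: Kc; rewrite memK => /andP[_ ->].
have CGc : c \in 'C_G(N) by rewrite inE Gc cNc.
have [ePc eP'c] := Pz c CGc.
have [eQc _] := wfP Xirr CK KI' Kc cCc.
exists (muG c * (zf c * wf KI' c)).
rewrite RGmu // RHmu // -muEq // ePc eP'c.
rewrite -/Q in eQc; rewrite eQc !tens_scalar !scale_scalar_mx.
by [].
Qed.
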